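(* Let $x,y\in S^1\cap\mathbb{H}^2$ be distinct, let $\{x_*,y_*\}=S^1\cap\partial\mathbb{H}^2=\{-1,1\}$, labelled so that $x_*,x,y,y_*$ occur in this order on the upper unit semicircle, and let $z$ be the hyperbolic midpoint of the hyperbolic segment $J[x,y]$. Let $v=L(x,x_* )\cap L(y,y_* )$ and let $a$ be the centre of the circle through $x$ and $y$ orthogonal to $S^1$, i.e. $a=i\frac{y(1+|x|^2)-x(1+|y|^2)}{2(x_2y_1-x_1y_2)}$ where $x=x_1+ix_2$, $y=y_1+iy_2$. Then: (1) if the line $L(x,y)$ meets the real axis, at the point $w$, then the line $L(w,z)$ is tangent to the circle $S^1$; (2) the line $L(v,z)$ is orthogonal to the real axis, i.e. $\operatorname{Re}v=\operatorname{Re}z$; (3) the line $L(a,z)$ is orthogonal to the real axis, i.e. $\operatorname{Re}a=\operatorname{Re}z$; (4) writing $x_1,y_1,z_1$ for the real points $\operatorname{Re}x,\operatorname{Re}y,\operatorname{Re}z$, the angle $\angle y_1z_1y$ equals the angle $\angle x_1z_1x$.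
   Context: $\mathbb{H}^2$ is the upper half plane with boundary $\partial\mathbb{H}^2=\mathbb{R}$, $S^1$ is the unit circle. $L(p,q)$ denotes the line through $p$ and $q$. The hyperbolic distance on $\mathbb{H}^2$ satisfies $\cosh\rho(x,y)=1+\frac{|x-y|^2}{2\operatorname{Im}x\operatorname{Im}y}$; the hyperbolic segment $J[x,y]$ for $x,y\in S^1\cap\mathbb{H}^2$ is the arc of $S^1$ between $x$ and $y$, and its hyperbolic midpoint is the $z\in J[x,y]$ with $\rho(x,z)=\rho(z,y)$. $\angle pqr$ denotes the angle at $q$ between the segments $[q,p]$ and $[q,r]$. *)

(* Defs.v *)
From Stdlib Require Export Reals.
From Coquelicot Require Export Coquelicot.
Open Scope R_scope.

Definition in_H2 (p : C) : Prop := 0 < Im p.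

Definition on_S1 (p : C) : Prop := Cmod p = 1.

Definition arcosh (t : R) : R := ln (t + sqrt (t ^ 2 - 1)).

Definition rho (p q : C) : R :=
  arcosh (1 + (Cmod (p - q)%C) ^ 2 / (2 * Im p * Im q)).

(* hyperbolic segment J[p,q] for p q on S^1 ∩ H^2: arc of S^1 between them *)
Definition J (p q : C) (w : C) : Prop :=
  on_S1 w /\ in_H2 w /\
  Rmin (Re p) (Re q) <= Re w <= Rmax (Re p) (Re q).

Definition hyp_midpoint (p q z : C) : Prop :=
  J p q z /\ rho p z = rho z q.

Definition L (p q : C) (w : C) : Prop :=
  exists t : R, w = (p + RtoC t * (q - p))%C.

Definition tangent_to_S1 (line : C -> Prop) : Prop :=
  exists p, line p /\ on_S1 p /\ forall q, line q -> on_S1 q -> q = p.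

(* p0, p1, p2, p3 occur in this order on the upper unit semicircle
   (points of the upper semicircle are ordered by their real parts,
    in one of the two directions) *)
Definition in_order4 (p0 p1 p2 p3 : C) : Prop :=
  (Re p0 < Re p1 /\ Re p1 < Re p2 /\ Re p2 < Re p3) \/
  (Re p0 > Re p1 /\ Re p1 > Re p2 /\ Re p2 > Re p3).

Definition orth_centre (p q : C) : C :=
  (Ci * (q * RtoC (1 + Cmod p ^ 2) - p * RtoC (1 + Cmod q ^ 2))
     / RtoC (2 * (Im p * Re q - Re p * Im q)))%C.

Definition re_pt (p : C) : C := RtoC (Re p).

Definition angle (p q r : C) : R :=
  acos ((Re (p - q)%C * Re (r - q)%C + Im (p - q)%C * Im (r - q)%C)
        / (Cmod (p - q)%C * Cmod (r - q)%C)).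

(* Main.v *)
Require Import Defs.
From Stdlib Require Import Lra Psatz.

Lemma Cmod2 (p : C) : Cmod p ^ 2 = fst p ^ 2 + snd p ^ 2.
Proof. unfold Cmod. rewrite pow2_sqrt; [lra|nra]. Qed.

Lemma S1_eq (p : C) : on_S1 p -> fst p ^ 2 + snd p ^ 2 = 1.
Proof. unfold on_S1; intro H. rewrite <- Cmod2, H. lra. Qed.

Lemma arcosh_inj a b : 1 <= a -> 1 <= b -> arcosh a = arcosh b -> a = b.
Proof.
  unfold arcosh; intros Ha Hb H.
  assert (Sa := sqrt_pos (a^2-1)). assert (Sb := sqrt_pos (b^2-1)).
  apply ln_inv in H; try lra.
  destruct (Rtotal_order a b) as [h|[h|h]]; auto.
  - assert (sqrt (a^2-1) <= sqrt (b^2-1)) by (apply sqrt_le_1_alt; nra). lra.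
  - assert (sqrt (b^2-1) <= sqrt (a^2-1)) by (apply sqrt_le_1_alt; nra). lra.
Qed.

Lemma sq0 a : a ^ 2 = 0 -> a = 0.
Proof. intro H. destruct (Req_dec a 0); auto. exfalso; apply (pow_nonzero a 2); auto. Qed.

Lemma D_ne (x1 x2 y1 y2 : R) : x1^2+x2^2 = 1 -> y1^2+y2^2=1 -> 0 < x2 -> 0 < y2 ->
  (x1,x2) <> (y1,y2) -> y1*x2 - x1*y2 <> 0.
Proof.
  intros Hx Hy h1 h2 Hne HD. apply Hne.
  assert (E: (x1*y1+x2*y2)^2 = 1) by nra.
  assert (x1*y1+x2*y2 = 1 \/ x1*y1+x2*y2 = -1) as [E1|E1] by nra.
  - assert ((x1-y1)^2 + (x2-y2)^2 = 0) by nra.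
    assert (H1: (x1-y1)^2 = 0) by (pose proof (pow2_ge_0 (x1-y1)); pose proof (pow2_ge_0 (x2-y2)); lra).
    assert (H2: (x2-y2)^2 = 0) by (pose proof (pow2_ge_0 (x1-y1)); pose proof (pow2_ge_0 (x2-y2)); lra).
    apply sq0 in H1. apply sq0 in H2.
    f_equal; lra.
  - assert ((x1+y1)^2 + (x2+y2)^2 = 0) by nra. pose proof (pow2_ge_0 (x1+y1)). nra.
Qed.

Lemma ang_eq dy dx h k : 0 < h -> 0 < k -> dy*k + dx*h = 0 ->
  dy*dy/(sqrt(dy^2)*sqrt(dy^2+h^2)) = dx*dx/(sqrt(dx^2)*sqrt(dx^2+k^2)).
Proof.
  intros Hh Hk E.
  destruct (Req_dec dy 0) as [Z|Z].
  { subst dy. assert (dx = 0) by nra. subst dx. unfold Rdiv. ring. }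
  assert (dx <> 0) by nra.
  assert (P1 : 0 < sqrt (dy^2)) by (apply sqrt_lt_R0; nra).
  assert (P2 : 0 < sqrt (dy^2+h^2)) by (apply sqrt_lt_R0; nra).
  assert (P3 : 0 < sqrt (dx^2)) by (apply sqrt_lt_R0; nra).
  assert (P4 : 0 < sqrt (dx^2+k^2)) by (apply sqrt_lt_R0; nra).
  apply Rsqr_inj.
  - apply Rdiv_le_0_compat; nra.
  - apply Rdiv_le_0_compat; nra.
  - unfold Rsqr.
    assert (S1 : sqrt(dy^2)*sqrt(dy^2)=dy^2) by (apply sqrt_sqrt; nra).
    assert (S2 : sqrt(dy^2+h^2)*sqrt(dy^2+h^2)=dy^2+h^2) by (apply sqrt_sqrt; nra).
    assert (S3 : sqrt(dx^2)*sqrt(dx^2)=dx^2) by (apply sqrt_sqrt; nra).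
    assert (S4 : sqrt(dx^2+k^2)*sqrt(dx^2+k^2)=dx^2+k^2) by (apply sqrt_sqrt; nra).
    replace (dy * dy / (sqrt (dy ^ 2) * sqrt (dy ^ 2 + h ^ 2)) * (dy * dy / (sqrt (dy ^ 2) * sqrt (dy ^ 2 + h ^ 2))))
      with (dy*dy*(dy*dy)/((sqrt(dy^2)*sqrt(dy^2))*(sqrt(dy^2+h^2)*sqrt(dy^2+h^2)))) by (field; lra).
    replace (dx * dx / (sqrt (dx ^ 2) * sqrt (dx ^ 2 + k ^ 2)) * (dx * dx / (sqrt (dx ^ 2) * sqrt (dx ^ 2 + k ^ 2))))
      with (dx*dx*(dx*dx)/((sqrt(dx^2)*sqrt(dx^2))*(sqrt(dx^2+k^2)*sqrt(dx^2+k^2)))) by (field; lra).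
    rewrite S1, S2, S3, S4.
    assert (Edx: dx = -(dy*k)/h).
    { apply (Rmult_eq_reg_r h); [|lra]. unfold Rdiv. rewrite Rmult_assoc, Rinv_l; lra. }
    rewrite Edx.
    field. split; [lra|]. split; [|nra].
    intro HH. assert (dy * k = 0) by (field_simplify in HH; nra). nra.
Qed.

Lemma part2 e x1 x2 y1 y2 v1 v2 t s : x1^2+x2^2=1 -> y1^2+y2^2=1 -> 0<x2 -> e*e = 1 ->
  v1 = x1 + t*(e - x1) -> v2 = x2 - t*x2 -> v1 = y1 + s*(-e - y1) -> v2 = y2 - s*y2 ->
  v1*(y1*x2-x1*y2) = x2-y2.
Proof.
  intros Hx Hy Hx2 He H1 H2 H3 H4.
  set (K := y1*x2 - x1*y2 + e*(x2+y2)).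
  assert (P : (1-t)*x2 = (1-s)*y2) by lra.
  assert (Q : 2*e = (1-s)*(y1+e) - (1-t)*(x1-e)) by (rewrite H1 in H3; nra).
  assert (QK : (1-s)*K = 2*e*x2).
  { unfold K. replace ((1 - s) * (y1 * x2 - x1 * y2 + e * (x2 + y2))) with
      ((1-s)*(y1+e)*x2 - ((1-s)*y2)*(x1-e)) by ring. rewrite <- P.
    replace ((1 - s) * (y1 + e) * x2 - (1 - t) * x2 * (x1 - e)) with (x2*((1-s)*(y1+e) - (1-t)*(x1-e))) by ring.
    rewrite <- Q. ring. }
  assert (KN : K <> 0). { intro HK. rewrite HK in QK. nra. }
  assert (V1 : v1 = -e + (1-s)*(y1+e)) by (rewrite H3; nra).
  apply (Rmult_eq_reg_r K); auto.
  rewrite V1.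
  replace ((- e + (1 - s) * (y1 + e)) * (y1 * x2 - x1 * y2) * K) with
     (-e*(y1 * x2 - x1 * y2)*K + ((1-s)*K)*(y1+e)*(y1 * x2 - x1 * y2)) by ring.
  rewrite QK. unfold K.
  assert (A1 : x2^2*(y1^2+y2^2-1) = 0) by (rewrite Hy; ring).
  assert (A2 : y2^2*(x1^2+x2^2-1) = 0) by (rewrite Hx; ring).
  assert (e = 1 \/ e = -1) as [-> | ->] by nra; lra.
Qed.

Lemma clear_eq A B c d : c <> 0 -> d <> 0 -> 1 + A / c = 1 + B / d -> A * d = B * c.
Proof. intros Hc Hd H. apply (f_equal (fun t => (t-1)*c*d)) in H. field_simplify in H; auto. lra. Qed.

Theorem lemma3p1 (x y xs ys z : C) :
  on_S1 x -> in_H2 x -> on_S1 y -> in_H2 y -> x <> y ->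
  ((xs = RtoC (-1) /\ ys = RtoC 1) \/ (xs = RtoC 1 /\ ys = RtoC (-1))) ->
  in_order4 xs x y ys ->
  hyp_midpoint x y z ->
  (* (1) *)
  (forall w : C, Im w = 0 -> L x y w -> tangent_to_S1 (L w z)) /\
  (* (2) v = L(x,x_* ) ∩ L(y,y_* ) *)
  (forall v : C, L x xs v -> L y ys v -> Re v = Re z) /\
  (* (3) *)
  Re (orth_centre x y) = Re z /\
  (* (4) *)
  angle (re_pt y) (re_pt z) y = angle (re_pt x) (re_pt z) x.
Proof.
  intros Hx Hx2 Hy Hy2 Hne Hends _ Hmid.
  destruct Hmid as [[Hz [Hz2 _]] Hrho].
  apply S1_eq in Hx. apply S1_eq in Hy. apply S1_eq in Hz.
  unfold rho in Hrho. apply arcosh_inj in Hrho.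
  2:{ pose proof (pow2_ge_0 (Cmod (x - z))). unfold in_H2 in *.
      assert (0 <= Cmod (x - z) ^ 2 / (2 * Im x * Im z)) by (apply Rdiv_le_0_compat; nra). lra. }
  2:{ pose proof (pow2_ge_0 (Cmod (z - y))). unfold in_H2 in *.
      assert (0 <= Cmod (z - y) ^ 2 / (2 * Im z * Im y)) by (apply Rdiv_le_0_compat; nra). lra. }
  unfold in_H2 in *.
  apply clear_eq in Hrho; [| nra | nra].
  rewrite !Cmod2 in Hrho.
  destruct x as [x1 x2], y as [y1 y2], z as [z1 z2]; unfold Re, Im in *; cbn [fst snd Cminus Cplus Copp] in *.
  assert (HD : y1*x2 - x1*y2 <> 0) by (apply D_ne; auto).
  assert (H1 : (((x1-z1)^2+(x2-z2)^2)*y2 - ((z1-y1)^2+(z2-y2)^2)*x2) * (2*z2) = 0).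
  { replace ((((x1-z1)^2+(x2-z2)^2)*y2 - ((z1-y1)^2+(z2-y2)^2)*x2) * (2*z2)) with
     (((x1 + - z1) ^ 2 + (x2 + - z2) ^ 2) * (2 * z2 * y2) - ((z1 + - y1) ^ 2 + (z2 + - y2) ^ 2) * (2 * x2 * z2)) by ring.
    lra. }
  apply Rmult_integral in H1. destruct H1 as [H1|H1]; [|lra].
  assert (Hz1 : z1 * (y1*x2 - x1*y2) = x2 - y2).
  { replace (((x1-z1)^2+(x2-z2)^2)*y2 - ((z1-y1)^2+(z2-y2)^2)*x2) with
      (y2*(x1^2+x2^2) + y2*(z1^2+z2^2) - x2*(y1^2+y2^2) - x2*(z1^2+z2^2) - 2*y2*(x1*z1+x2*z2) + 2*x2*(y1*z1+y2*z2)) in H1 by ring.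
    rewrite Hx, Hy, Hz in H1. lra. }
  clear Hrho.
  split; [|split; [|split]].
  - intros [w1 w2] Hw [t Ht]. unfold RtoC, Cmult, Cminus, Cplus, Copp in Ht; cbn [fst snd] in *.
    injection Ht as Ht1 Ht2.
    assert (Tt : t*(x2-y2) = x2) by lra.
    assert (Hw1 : (w1*z1 - 1)*(y1*x2 - x1*y2) = 0).
    { replace ((w1*z1 - 1)*(y1*x2 - x1*y2)) with (w1*(z1*(y1*x2 - x1*y2)) - (y1*x2 - x1*y2)) by ring.
      rewrite Hz1, Ht1.
      replace ((x1 + (t * (y1 + - x1) - 0 * (y2 + - x2))) * (x2 - y2) - (y1 * x2 - x1 * y2))
        with (t*(x2-y2)*(y1-x1) - x2*(y1-x1)) by ring.
      rewrite Tt. ring. }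
    apply Rmult_integral in Hw1. destruct Hw1 as [Hw1|Hw1]; [|contradiction].
    assert (Wne : w1^2 - 1 <> 0).
    { intro HH. assert (z1^2 = 1) by nra. nra. }
    subst w2.
    exists (z1, z2). split; [|split].
    + exists 1. unfold RtoC, Cmult, Cminus, Cplus, Copp; cbn [fst snd]. f_equal; ring.
    + unfold on_S1, Cmod. cbn [fst snd]. rewrite Hz. apply sqrt_1.
    + intros [q1 q2] [r Hr] Hq. apply S1_eq in Hq. cbn [fst snd] in Hq.
      unfold RtoC, Cmult, Cminus, Cplus, Copp in Hr; cbn [fst snd] in Hr.
      injection Hr as Hr1 Hr2. subst q1 q2.
      assert (Hr : (w1^2-1)*(r-1)^2 = 0).
      { replace ((w1^2-1)*(r-1)^2) with
          ((w1 + (r * (z1 + - w1) - 0 * (z2 + - 0))) ^ 2 + (0 + (r * (z2 + - 0) + 0 * (z1 + - w1))) ^ 2 - 1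
           - r^2*(z1^2+z2^2-1) - 2*r*(w1*z1-1) + 2*r^2*(w1*z1-1)) by ring.
        rewrite Hq, Hz, Hw1. ring. }
      apply Rmult_integral in Hr. destruct Hr as [Hr|Hr]; [contradiction|].
      apply sq0 in Hr. assert (r = 1) by lra. subst r. f_equal; ring.
  - intros [v1 v2] [t Ht] [s Hs].
    destruct Hends as [[-> ->]|[-> ->]];
    unfold RtoC, Cmult, Cminus, Cplus, Copp in Ht, Hs; cbn [fst snd] in *;
    injection Ht as Ht1 Ht2; injection Hs as Hs1 Hs2.
    + assert (HV : v1*(y1*x2-x1*y2) = x2-y2)
        by (apply (part2 (-1) x1 x2 y1 y2 v1 v2 t s); lra).
      apply (Rmult_eq_reg_r (y1*x2-x1*y2)); auto. lra.
    + assert (HV : v1*(y1*x2-x1*y2) = x2-y2)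
        by (apply (part2 1 x1 x2 y1 y2 v1 v2 t s); lra).
      apply (Rmult_eq_reg_r (y1*x2-x1*y2)); auto. lra.
  - unfold orth_centre. rewrite !Cmod2. cbn [fst snd] in *. rewrite Hx, Hy.
    unfold Cdiv, Cinv, Cmult, Ci, RtoC, Cminus, Cplus, Copp; cbn [fst snd].
    unfold Re, Im; cbn [fst snd].
    symmetry. apply (Rmult_eq_reg_r (y1*x2-x1*y2)); [|auto]. rewrite Hz1.
    field. intro HH. apply HD. nra.
  - assert (Kr: ((y1-z1)*x2 + (x1-z1)*y2) * (y1*x2 - x1*y2) = 0).
    { replace (((y1-z1)*x2 + (x1-z1)*y2) * (y1*x2 - x1*y2)) with
        ((x2*y1 + x1*y2)*(y1*x2 - x1*y2) - z1*(y1*x2 - x1*y2)*(x2+y2)) by ring.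
      rewrite Hz1.
      replace ((x2*y1 + x1*y2)*(y1*x2 - x1*y2) - (x2 - y2)*(x2+y2)) with
        (x2^2*(y1^2+y2^2) - y2^2*(x1^2+x2^2) - x2^2 + y2^2) by ring.
      rewrite Hx, Hy. ring. }
    apply Rmult_integral in Kr. destruct Kr as [Kr|Kr]; [|contradiction].
    unfold angle, re_pt, RtoC, Cmod, Cminus, Cplus, Copp; unfold Re, Im; cbn [fst snd].
    f_equal. rewrite Ropp_0, !Rplus_0_r, !Rmult_0_l, !Rplus_0_r.
    replace (0^2) with 0 by ring. rewrite !Rplus_0_r.
    apply ang_eq; auto.
Qed.
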